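(* Let $d>1$ and $\gamma>0$, and let $K(x,y)=e^{-\gamma\|x-y\|_2^2}$ be the Gaussian kernel on $\mathbb{R}^d$. There exists a finite dataset $X\subset\mathbb{R}^d$ such that for every $D\in\mathbb{N}$ and every map $\phi=(\phi_1,\dots,\phi_D):X\to\mathbb{R}^D$ satisfying $\langle\phi(x),\phi(y)\rangle=\sum_{j=1}^D\phi_j(x)\phi_j(y)=K(x,y)$ for all $x,y\in X$, there exists some $j\in[D]$ such that $\phi_j$ depends on more than one input coordinate, i.e. there is no $i\in[d]$ and no function $h:\mathbb{R}\to\mathbb{R}$ with $\phi_j(x)=h(x_i)$ for all $x\in X$.
   Context: For $x\in\mathbb{R}^d$, $x_i$ denotes its $i$-th coordinate; $[D]=\{1,\dots,D\}$. A feature map $\phi:X\to\mathbb{R}^D$ is called interpretable if each component $\phi_j$ depends on exactly one coordinate of $x$; the theorem says no feature map of the Gaussian kernel on this $X$ is interpretable. *)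

(* Defs.v *)
From mathcomp Require Import all_boot all_order all_algebra.
From mathcomp Require Import all_classical all_reals all_analysis.
Import Order.TTheory GRing.Theory Num.Theory.
Local Open Scope ring_scope.

Definition sqdist {R : realType} {d : nat} (x y : 'rV[R]_d) : R :=
  \sum_(i < d) (x ord0 i - y ord0 i) ^+ 2.

Definition gauss_kernel {R : realType} {d : nat} (gamma : R) (x y : 'rV[R]_d) : R :=
  expR (- gamma * sqdist x y).

Definition is_feature_map {R : realType} {d D : nat} (K : 'rV[R]_d -> 'rV[R]_d -> R)
  (X : seq 'rV[R]_d) (phi : 'rV[R]_d -> 'I_D -> R) : Prop :=
  forall x y, x \in X -> y \in X -> \sum_(j < D) phi x j * phi y j = K x y.

Definition depends_on_one_coord {R : realType} {d : nat} (X : seq 'rV[R]_d)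
  (f : 'rV[R]_d -> R) : Prop :=
  exists (i : 'I_d) (h : R -> R), forall x, x \in X -> f x = h (x ord0 i).

(* Main.v *)
Require Import Defs.
From mathcomp Require Import all_boot all_order all_algebra.
From mathcomp Require Import all_classical all_reals all_analysis.
From mathcomp Require Import ring lra.
Import Order.TTheory GRing.Theory Num.Theory.
Local Open Scope ring_scope.

Definition pt {R : realType} {d : nat} (i0 i1 : 'I_d) (a b : R) : 'rV[R]_d :=
  \row_k (if k == i0 then a else if k == i1 then b else 0).

Lemma sqdist_pt {R : realType} {d : nat} (i0 i1 : 'I_d) (a b : R) :
  i0 != i1 -> sqdist (pt i0 i1 a b) (pt i0 i1 0 0) = a ^+ 2 + b ^+ 2.
Proof.
move=> ne; rewrite /sqdist (bigD1 i0) //= (bigD1 i1) 1?eq_sym //= big1.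
  by rewrite !mxE eqxx eq_sym (negPf ne) eqxx !subr0 addr0.
move=> k /andP [k1 k0]; rewrite !mxE (negPf k1) (negPf k0); by rewrite subr0 expr0n.
Qed.

Theorem theorem1 (R : realType) (d : nat) (gamma : R) :
  (1 < d)%N -> 0 < gamma ->
  exists X : seq 'rV[R]_d,
    forall (D : nat) (phi : 'rV[R]_d -> 'I_D -> R),
      is_feature_map (gauss_kernel gamma) X phi ->
      exists j : 'I_D, ~ depends_on_one_coord X (fun x => phi x j).
Proof.
move=> d1 g0.
have h0 : (0 < d)%N by apply: ltn_trans d1.
pose i0 : 'I_d := Ordinal h0.
pose i1 : 'I_d := Ordinal d1.
have ne : i0 != i1 by [].
pose p00 := pt i0 i1 (0:R) 0.
pose p10 := pt i0 i1 (1:R) 0.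
pose p01 := pt i0 i1 (0:R) 1.
pose p11 := pt i0 i1 (1:R) 1.
exists [:: p00; p10; p01; p11] => D phi Hf.
apply/not_existsP => Hall.
have E j : phi p11 j * phi p00 j =
   phi p10 j * phi p00 j + phi p01 j * phi p00 j - phi p00 j * phi p00 j.
  have := Hall j; move/contrapT => [i [h Hh]].
  rewrite !Hh ?inE ?eqxx ?orbT //= /p00 /p10 /p01 /p11 !mxE.
  by case: (i == i0); case: (i == i1); rewrite /=; ring.
have S : \sum_(j < D) phi p11 j * phi p00 j =
   \sum_(j < D) phi p10 j * phi p00 j + \sum_(j < D) phi p01 j * phi p00 j
   - \sum_(j < D) phi p00 j * phi p00 j.
  by rewrite -big_split -sumrB; apply: eq_bigr => j _; rewrite E.
rewrite !Hf ?inE ?eqxx ?orbT // /gauss_kernel !sqdist_pt // in S.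
rewrite !expr1n !expr0n /= !addr0 !add0r mulr0 expR0 mulr1 in S.
have e2 : expR (- gamma * (1 + 1)) = expR (- gamma) ^+ 2.
  by rewrite -expRM_natr.
rewrite e2 in S.
have lt1 : expR (- gamma) < 1 by rewrite expR_lt1 oppr_lt0.
have : (expR (- gamma) - 1) ^+ 2 = 0 by rewrite sqrrB1 S; ring.
move/eqP; rewrite sqrf_eq0 subr_eq0 => /eqP E1.
by rewrite E1 ltxx in lt1.
Qed.
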